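(* Let $X$ be a uniform space and let $(\mu_i)_{i\in I}$ be a net of Borel probability measures on $X$ which concentrates in $X$. Let $H$ be a uniformly equicontinuous, norm-bounded set of bounded uniformly continuous real-valued functions on $X$, and let $\epsilon>0$. Then $$\sup_{f\in H}\mu_i\bigl(\{x\in X : |f(x)-\mathbb E_{\mu_i}(f)|>\epsilon\}\bigr)\to 0 .$$
   Context: For an entourage $U$ of $X$ and $A\subseteq X$, $U[A]=\{y\in X:\exists x\in A,\ (x,y)\in U\}$. A net $(\mu_i)_{i\in I}$ of Borel probability measures on $X$ concentrates in $X$ if, whenever $(A_i)_{i\in I}$ are Borel subsets of $X$ with $\liminf_{i}\mu_i(A_i)>0$, one has $\lim_i\mu_i(U[A_i])=1$ for every open entourage $U$ of $X$. $\mathbb E_{\mu}(f)=\int f\,d\mu$. *)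

(* Defs.v *)
From HB Require Import structures.
From mathcomp Require Import all_boot all_order all_algebra.
From mathcomp Require Import all_classical all_reals all_analysis.
Set Implicit Arguments. Unset Strict Implicit. Unset Printing Implicit Defensive.
Import Order.TTheory GRing.Theory Num.Theory.
Import numFieldNormedType.Exports.
Local Open Scope classical_set_scope.
Local Open Scope ring_scope.

Definition directed_set (I : Type) (le : I -> I -> Prop) : Prop :=
  [/\ (exists i : I, True),
      (forall i, le i i),
      (forall i j k, le i j -> le j k -> le i k) &
      (forall i j, exists k, le i k /\ le j k)].

Definition net_cvg (I : Type) (le : I -> I -> Prop) (T : topologicalType)
  (u : I -> T) (l : T) : Prop :=
  forall V, nbhs l V -> exists i0, forall i, le i0 i -> V (u i).

Definition net_liminf (I : Type) (le : I -> I -> Prop) (R : realType)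
  (u : I -> \bar R) : \bar R :=
  ereal_sup [set ereal_inf [set u j | j in [set j | le i0 j]] | i0 in [set: I]].

Notation borel_type X := (g_sigma_algebraType (@open X)).

Definition ent_img (X : Type) (U : set (X * X)) (A : set X) : set X :=
  [set y | exists2 x, A x & U (x, y)].

Definition concentrates (R : realType) (X : puniformType) (I : Type)
  (le : I -> I -> Prop) (mu : I -> probability (borel_type X) R) : Prop :=
  forall A : I -> set X,
    (forall i, (@open X).-sigma.-measurable (A i)) ->
    (0 < net_liminf le (fun i => mu i (A i)))%E ->
    forall U : set (X * X), entourage U -> open U ->
      net_cvg le (fun i => mu i (ent_img U (A i))) 1%E.

(* Main.v *)
Require Import Defs.
From HB Require Import structures.
From mathcomp Require Import all_boot all_order all_algebra.
From mathcomp Require Import all_classical all_reals all_analysis.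
From mathcomp Require Import ring lra measurable_realfun.
Import Order.TTheory GRing.Theory Num.Theory.
Import numFieldNormedType.Exports.
Local Open Scope classical_set_scope.
Local Open Scope ring_scope.

Lemma open_ent_sub (X : uniformType) (E : set (X * X)) :
  entourage E -> exists U, [/\ entourage U, open U & U `<=` E].
Proof.
move=> entE.
have eW1 := entourage_split_ent entE.
have eW := entourage_split_ent eW1.
set W1 := split_ent E in eW1 *. set W := split_ent W1 in eW *.
exists E°; split; [|exact: open_interior|exact: interior_subset].
apply: (filterS _ eW) => -[x y] Wxy.
rewrite /interior; change (filter_prod (nbhs x) (nbhs y) E).
exists (xsection (W^-1)%relation x, xsection W y).
  split; [apply: nbhs_entourage; exact: entourage_inv|exact: nbhs_entourage].
move=> [a b] [/= /xsectionP Wa /xsectionP Wb].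
apply: (@entourage_split _ y) => //.
  exact: (@entourage_split _ x).
apply: (@entourage_split _ b) => //; exact: entourage_refl.
Qed.

Definition UC (R : realType) (X : uniformType) (g : X -> R) :=
  forall e : R, 0 < e -> exists2 W : set (X * X), entourage W &
     forall x y, W (x, y) -> `|g x - g y| < e.
Arguments UC {R X}.

Lemma uc_preimage_open (R : realType) (X : uniformType) (g : X -> R) (A : set R) :
  UC g -> open A -> open (g @^-1` A).
Proof.
move=> ucg oA; rewrite openE => x Agx.
have := oA _ Agx; rewrite /interior => /nbhs_ballP [r r0 rA].
have [W eW HW] := ucg r r0.
apply: (filterS _ (nbhs_entourage x eW)) => y /xsectionP Wy.
apply: rA; rewrite /ball /=; exact: HW.
Qed.

Lemma open_far (R : realType) (c eps : R) : open [set r : R | eps < `|r - c|].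
Proof.
rewrite openE => r /= hr; rewrite /interior.
apply/nbhs_ballP; exists (`|r - c| - eps); first by move: hr => /=; rewrite -subr_gt0.
move=> s; rewrite /ball /= => hs.
have : `|r - c| <= `|r - s| + `|s - c|.
  by rewrite (_ : r - c = (r - s) + (s - c)) ?ler_normD //; ring.
lra.
Qed.

Lemma open_borel (X : ptopologicalType) (A : set X) : open A ->
  (@open X).-sigma.-measurable A.
Proof. by move=> oA; exact: (@sub_sigma_algebra X setT (@open X) A oA). Qed.

Lemma uc_measurable (R : realType) (X : puniformType) (g : X -> R) :
  UC g -> measurable_fun setT (g : borel_type X -> R).
Proof.
move=> ucg; apply: (measurability _ (RGenOpens.measurableE R)).
move=> _ [_ [a [b ->]] <-]; rewrite setTI.
apply: open_borel; apply: uc_preimage_open => //; exact: interval_open.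
Qed.
Lemma int_lower d (T : measurableType d) (R : realType) (P : probability T R)
  (g : T -> R) (M c : R) (S : set T) :
  measurable S -> measurable_fun setT g -> (forall x, `|g x| <= M) ->
  (forall x, S x -> c < g x) ->
  (((c + M) * fine (P S) - M)%:E <= \int[P]_x (g x)%:E)%E.
Proof.
move=> mS mg hM hc.
have ig : P.-integrable setT (EFin \o g).
  apply: measurable_bounded_integrable => //.
    by rewrite ltey_eq fin_num_measure.
  exists M; split; first by rewrite num_real.
  by move=> K MK x _; apply: le_trans (hM x) (ltW MK).
have i1 := integrable_indic P mS.
have i1' := integrableZl measurableT (c + M) i1.
have i2 := finite_measure_integrable_cst P (- M) (@measurableT _ T).
have := @le_integral _ _ R P setT measurableT
  (fun x => ((c + M)%:E * (\1_S x)%:E + (EFin \o cst (- M)%R) x)%E) (EFin \o g)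
  (integrableD measurableT i1' i2) ig.
rewrite integralD//= integralZl// integral_indic// setIT.
rewrite (integral_cst P measurableT).
have -> : ((- M)%:E * P [set: T] = (- M)%:E)%E.
  by have h1 := probability_setT P; rewrite h1 mule1.

move=> H; apply: le_trans (H _); first by rewrite EFinD EFinM fineK // fin_num_measure.
move=> x _ /=; rewrite /indic; case: (boolP (x \in S)) => [/set_mem xS|xS].
  by rewrite -EFinM -EFinD lee_fin /= mulr1; have := hc x xS; lra.
rewrite -EFinM -EFinD lee_fin /= mulr0 add0r; have := hM x; rewrite ler_norml; lra.
Qed.

Lemma int_upper d (T : measurableType d) (R : realType) (P : probability T R)
  (g : T -> R) (M : R) :
  measurable_fun setT g -> (forall x, `|g x| <= M) ->
  (\int[P]_x (g x)%:E <= M%:E)%E.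
Proof.
move=> mg hM.
have ig : P.-integrable setT (EFin \o g).
  apply: measurable_bounded_integrable => //.
    by rewrite ltey_eq fin_num_measure.
  exists M; split; first by rewrite num_real.
  by move=> K MK x _; apply: le_trans (hM x) (ltW MK).
have i2 := finite_measure_integrable_cst P M (@measurableT _ T).
have := @le_integral _ _ R P setT measurableT (EFin \o g) (EFin \o cst M) ig i2.
rewrite /comp /= (integral_cst P measurableT).
have -> : (M%:E * P [set: T] = M%:E)%E.
  by have h1 := probability_setT P; rewrite h1 mule1.
apply => x _ /=; rewrite lee_fin; have := hM x; rewrite ler_norml; lra.
Qed.

Lemma int_fin d (T : measurableType d) (R : realType) (P : probability T R)
  (g : T -> R) (M : R) :
  measurable_fun setT g -> (forall x, `|g x| <= M) ->
  (\int[P]_x (g x)%:E = (fine (\int[P]_x (g x)%:E))%:E)%E.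
Proof.
move=> mg hM.
have ig : P.-integrable setT (EFin \o g).
  apply: measurable_bounded_integrable => //.
    by rewrite ltey_eq fin_num_measure.
  exists M; split; first by rewrite num_real.
  by move=> K MK x _; apply: le_trans (hM x) (ltW MK).
by rewrite fineK //; exact: integrable_fin_num ig.
Qed.

Lemma ent_img_open (X : uniformType) (U : set (X * X)) (A : set X) :
  open U -> open (ent_img U A).
Proof.
move=> oU; rewrite openE => y [x Ax Uxy].
rewrite openE in oU; have := oU (x, y) Uxy.
rewrite /interior; change (filter_prod (nbhs x) (nbhs y) U -> nbhs y (ent_img U A)).
move=> [[P Q] [Px Qy] sPQ].
apply: filterS Qy => z Qz; exists x => //; apply: sPQ; split => //=.
exact: nbhs_singleton.
Qed.

Lemma core (R : realType) (X : puniformType) (I : Type) (le : I -> I -> Prop)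
  (mu : I -> probability (borel_type X) R) (g : I -> X -> R) (M eps delta : R)
  (U : set (X * X)) :
  directed_set le -> concentrates le mu -> entourage U -> open U ->
  (forall i x y, U (x, y) -> `|g i x - g i y| < eps / 2) ->
  (forall i x, `|g i x| <= M) -> (forall i, UC (g i)) ->
  0 < eps -> 0 < delta -> delta <= 1 ->
  ~ (forall i0, exists i, le i0 i /\
       (delta%:E < mu i [set x | (fine (\int[mu i]_y (g i y)%:E) + eps < g i x)%R])%E).
Proof.
move=> [[i00 _] _ _ _] conc eU oU hU hM ucg eps0 d0 d1 cof.
have M0 : 0 <= M by apply: le_trans (hM i00 point); exact: normr_ge0.
pose e i := fine (\int[mu i]_y (g i y)%:E).
pose B i := [set x | e i + eps < g i x].
have mB i : (@open X).-sigma.-measurable (B i).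
  apply: open_borel.
  exact: (@uc_preimage_open _ _ _ [set r | e i + eps < r] (ucg i) (@open_gt _ _)).
pose A i := if pselect (delta%:E < mu i (B i))%E then B i else setT.
have mA i : (@open X).-sigma.-measurable (A i).
  by rewrite /A; case: (pselect _) => h; [exact: mB| exact: measurableT].
have hA i : (delta%:E <= mu i (A i))%E.
  rewrite /A; case: (pselect _) => [h|h]; first exact: ltW.
  by have h1 := probability_setT (mu i); rewrite h1 lee_fin.
have lim : (0 < net_liminf le (fun i => mu i (A i)))%E.
  apply: (@lt_le_trans _ _ delta%:E); first by rewrite lte_fin.
  apply: le_trans (ereal_sup_ubound _); last by exists i00.
  by apply/ereal_infP => _ [j _ <-].
have cv := conc A mA lim U eU oU.
pose gam := eps / (2 * (4 * M + eps)).
have gam0 : 0 < gam by rewrite divr_gt0 // mulr_gt0 //; lra.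
have gamE : gam * (4 * M + eps) = eps / 2.
  rewrite /gam; field; lra.
have nV : nbhs (1%:E : \bar R) [set y : \bar R | ((1 - gam)%:E < y)%E].
  by apply: (@nbhs_open_ereal_gt _ 1 (fun r => r - gam)); lra.
have [i0 Hi0] := cv _ nV.
have [i [li0i hi]] := cof i0.
have AB : A i = B i by rewrite /A; case: pselect.
have := Hi0 i li0i; rewrite AB /= => hU1.
pose S := [set x | e i + eps / 2 < g i x].
have mS : (@open X).-sigma.-measurable S.
  apply: open_borel.
  exact: (@uc_preimage_open _ _ _ [set r | e i + eps / 2 < r] (ucg i) (@open_gt _ _)).
have sub : ent_img U (B i) `<=` S.
  move=> y [x Bx Uxy]; rewrite /S /=; have := hU i x y Uxy.
  rewrite /B /= in Bx; move=> /ltr_normlP [h1 h2]; lra.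
have mU : (@open X).-sigma.-measurable (ent_img U (B i)).
  by apply: open_borel; apply: ent_img_open.
have le1 : (mu i (ent_img U (B i)) <= mu i S)%E := le_measure (mu i) (mem_set mU) (mem_set mS) sub.
have pS : ((1 - gam)%:E < mu i S)%E by apply: lt_le_trans le1.
have pS1 : (mu i S <= 1)%E := probability_le1 (mu i) mS.
have mg : measurable_fun setT (g i : borel_type X -> R) := @uc_measurable _ _ _ (ucg i).
have h1 := @int_lower _ _ _ (mu i) (g i) M (e i + eps / 2) S mS mg (hM i) (fun x Sx => Sx).
have h2 := @int_upper _ _ _ (mu i) (g i) M mg (hM i).
rewrite (@int_fin _ _ _ (mu i) (g i) M mg (hM i)) -/(e i) lee_fin in h1 h2.
move: pS pS1; rewrite -(fineK (fin_num_measure (mu i) _ mS)) !lte_fin !lee_fin.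
set p := fine (mu i S) => pS pS1.
move: h2; rewrite lee_fin => h2.
have h1p : (e i + eps / 2 + M) * p - M <= e i by exact: h1.
have k1 : 0 <= (M - e i) * (1 - p) by apply: mulr_ge0; lra.
have k2 : 0 <= M * (gam - (1 - p)) by apply: mulr_ge0; lra.
have k3 : 0 < eps * (p - (1 - gam)) by apply: mulr_gt0; lra.
nra.
Qed.

Lemma bdd_integrable d (T : measurableType d) (R : realType) (P : probability T R)
  (g : T -> R) (M : R) :
  measurable_fun setT g -> (forall x, `|g x| <= M) -> P.-integrable setT (EFin \o g).
Proof.
move=> mg hM; apply: measurable_bounded_integrable => //.
  by rewrite ltey_eq fin_num_measure.
exists M; split; first by rewrite num_real.
by move=> K MK x _; apply: le_trans (hM x) (ltW MK).
Qed.

Lemma Bset_eq (T : Type) (R : realType) (f : T -> R) (c eps : R) :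
  [set x | (`|(f x)%:E - c%:E| > eps%:E)%E] = [set x | eps < `|f x - c|].
Proof. by apply/seteqP; split => x /=; rewrite lte_fin. Qed.

Lemma split_far (R : realType) (a c eps : R) : eps < `|a - c| ->
  c + eps < a \/ - c + eps < - a.
Proof.
move=> h; case: (lerP 0 (a - c)) => h0.
  by left; move: h; rewrite ger0_norm //; lra.
by right; move: h; rewrite ltr0_norm //; lra.
Qed.

Lemma UCN (R : realType) (X : uniformType) (g : X -> R) : UC g -> UC (fun x => - g x).
Proof.
move=> h e e0; have [W eW HW] := h e e0; exists W => // x y Wxy.
by rewrite -opprD normrN; exact: HW.
Qed.

Theorem corollary3p7 (R : realType) (X : puniformType) (I : Type)
  (le : I -> I -> Prop) (mu : I -> probability (borel_type X) R)
  (H : set (X -> R)) (eps : R) :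
  directed_set le ->
  concentrates le mu ->
  (* each f in H is bounded and uniformly continuous *)
  (forall f, H f -> (exists M : R, forall x, `|f x| <= M) /\ @unif_continuous X R f) ->
  (* H is uniformly equicontinuous *)
  (forall e : R, 0 < e -> exists2 U : set (X * X), entourage U &
     forall f, H f -> forall x y, U (x, y) -> `|f x - f y| < e) ->
  (* H is norm-bounded (in the sup norm) *)
  (exists M : R, forall f, H f -> forall x, `|f x| <= M) ->
  0 < eps ->
  net_cvg le
    (fun i => ereal_sup ([set 0%E] `|` [set mu i [set x | (`|(f x)%:E - \int[mu i]_y (f y)%:E| > eps%:E)%E]
                        | f in H])) 0%E.
Proof.
move=> dir conc _ heq [M0 hM0] eps0.
have dir' := dir; case: dir' => [[i00 _] _ ltrans ldir].
pose M := `|M0|.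
have hM f : H f -> forall x, `|f x| <= M.
  by move=> Hf x; apply: le_trans (hM0 f Hf x) _; exact: ler_norm.
have M0' : 0 <= M by exact: normr_ge0.
have [W eW hW] := heq (eps / 2) ltac:(lra).
have [U [eU oU UW]] := @open_ent_sub _ _ eW.
pose Bs i (f : X -> R) :=
  [set x | (`|(f x)%:E - \int[mu i]_y (f y)%:E| > eps%:E)%E].
have claim : forall delta, 0 < delta -> delta <= 1 -> exists i0, forall i, le i0 i ->
    forall f, H f -> (mu i (Bs i f) <= delta%:E)%E.
  move=> delta d0 d1.
  apply: contrapT => nx.
  have cof : forall i0, exists i, le i0 i /\ exists f, H f /\ (delta%:E < mu i (Bs i f))%E.
    move=> i0; apply: contrapT => hn; apply: nx; exists i0 => i li f Hf.
    rewrite leNgt; apply/negP => hlt; apply: hn; exists i; split => //; by exists f.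
  have ex : forall i, exists gi : X -> R,
      [/\ (forall x, `|gi x| <= M), (forall x y, U (x, y) -> `|gi x - gi y| < eps / 2),
          UC gi &
          ((exists f, H f /\ (delta%:E < mu i (Bs i f))%E) -> (delta%:E < mu i (Bs i gi))%E)].
    move=> i; case: (pselect (exists f, H f /\ (delta%:E < mu i (Bs i f))%E)).
      move=> [f [Hf hf]]; exists f; split => //.
      - exact: hM.
      - by move=> x y /UW; exact: hW.
      - move=> e e0; have [W' eW' hW'] := heq e e0; exists W' => // x y; exact: hW'.
    move=> nf; exists (fun=> 0); split => //.
    - by move=> x; rewrite normr0.
    - by move=> x y _; rewrite subrr normr0; lra.
    - by move=> e e0; exists setT; [exact: entourageT| move=> x y _; rewrite subrr normr0].
  have [g hg] := choice ex.
  have gM i : forall x, `|g i x| <= M by have [] := hg i.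
  have gU i : forall x y, U (x, y) -> `|g i x - g i y| < eps / 2 by have [] := hg i.
  have gUC i : UC (g i) by have [] := hg i.
  have gbad i : (exists f, H f /\ (delta%:E < mu i (Bs i f))%E) -> (delta%:E < mu i (Bs i (g i)))%E.
    by have [] := hg i.
  pose Bp i := [set x | (fine (\int[mu i]_y (g i y)%:E) + eps < g i x)%R].
  pose Bn i := [set x | (fine (\int[mu i]_y (- g i y)%:E) + eps < - g i x)%R].
  have split i : (delta%:E < mu i (Bs i (g i)))%E ->
      ((delta / 2)%:E < mu i (Bp i))%E \/ ((delta / 2)%:E < mu i (Bn i))%E.
    move=> hb.
    have mg := @uc_measurable _ _ _ (gUC i).
    have mgN := @uc_measurable _ _ _ (@UCN _ _ _ (gUC i)).
    have eN : fine (\int[mu i]_y (- g i y)%:E) = - fine (\int[mu i]_y (g i y)%:E).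
      rewrite (_ : (fun y => (- g i y)%:E) = (fun y => - (g i y)%:E)%E); last first.
        by apply/funext => y; rewrite EFinN.
      rewrite integralN ?fineN //.
      exact: (integrable_add_def measurableT (@bdd_integrable _ _ _ (mu i) (g i) M mg (gM i))).
    have mBp : (@open X).-sigma.-measurable (Bp i).
      apply: open_borel.
      exact: (@uc_preimage_open _ _ _ [set r | _ + eps < r] (gUC i) (@open_gt _ _)).
    have mBn : (@open X).-sigma.-measurable (Bn i).
      apply: open_borel.
      exact: (@uc_preimage_open _ _ _ [set r | _ + eps < r] (@UCN _ _ _ (gUC i)) (@open_gt _ _)).
    have sB : Bs i (g i) `<=` Bp i `|` Bn i.
      rewrite /Bs (@int_fin _ _ _ (mu i) (g i) M mg (gM i)) Bset_eq => x /= hx.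
      by rewrite /Bp /Bn eN; exact: split_far.
    have mBs : (@open X).-sigma.-measurable (Bs i (g i)).
      rewrite /Bs (@int_fin _ _ _ (mu i) (g i) M mg (gM i)) Bset_eq.
      apply: open_borel.
      exact: (@uc_preimage_open _ _ _ [set r | eps < `|r - _|] (gUC i) (open_far _ _ _)).
    have := le_measure (mu i) (mem_set mBs) (mem_set (measurableU _ _ mBp mBn)) sB.
    move=> /le_trans /(_ (measureU2 (mu i) mBp mBn)) hle.
    have hb' := lt_le_trans hb hle.
    case: (ltP (delta / 2)%:E (mu i (Bp i))) => [h|h]; first by left.
    case: (ltP (delta / 2)%:E (mu i (Bn i))) => [h'|h']; first by right.
    by have := lt_le_trans hb' (leeD h h'); rewrite -EFinD lte_fin; lra.
  have cof2 : forall i0, exists i, le i0 i /\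
      (((delta / 2)%:E < mu i (Bp i))%E \/ ((delta / 2)%:E < mu i (Bn i))%E).
    move=> i0; have [i [li hf]] := cof i0; exists i; split => //.
    exact: split i (gbad i hf).
  case: (pselect (forall i0, exists i, le i0 i /\ ((delta / 2)%:E < mu i (Bp i))%E)) => hp.
    apply: (@core R X I le mu g M eps (delta / 2) U dir conc eU oU gU gM gUC eps0 _ _ hp); lra.
  have [i1 hi1] : exists i1, forall i, le i1 i -> ~ ((delta / 2)%:E < mu i (Bp i))%E.
    apply: contrapT => hn; apply: hp => i0; apply: contrapT => hn2; apply: hn.
    exists i0 => i li hlt; apply: hn2; by exists i.
  apply: (@core R X I le mu (fun i x => - g i x) M eps (delta / 2) U dir conc eU oU _ _ _ eps0 _ _).
  - by move=> i x y Uxy; rewrite -opprD normrN; exact: gU.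
  - by move=> i x; rewrite normrN; exact: gM.
  - by move=> i; exact: UCN.
  - lra.
  - lra.
  move=> i0; have [k [k0 k1]] := ldir i0 i1; have [i [li h]] := cof2 k.
  exists i; split; first exact: ltrans k0 li.
  case: h => // h; exfalso; exact: (hi1 i (ltrans _ _ _ k1 li) h).
move=> V nV.
have : \forall r \near (0 : R), V r%:E := nV.
move=> /nbhs_ballP [e e0 eV].
have dpos : 0 < Num.min (e / 2) 1.
  rewrite lt_min; apply/andP; split => //; apply: divr_gt0 => //.
have dle1 : Num.min (e / 2) 1 <= 1 by rewrite ge_min lexx orbT.
have [i0 hi0] := claim (Num.min (e / 2) 1) dpos dle1.
exists i0 => i li.
set F := ereal_sup _.
have F0 : (0 <= F)%E by apply: ereal_sup_ubound; left.
have F1 : (F <= (Num.min (e / 2) 1)%:E)%E.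
  apply/ereal_supP => y [/= ->|[f Hf <-]]; last exact: hi0.
  by rewrite lee_fin le_min; apply/andP; split => //; apply: divr_ge0 => //; exact: ltW.
have Ffin : F \is a fin_num by rewrite ge0_fin_numE // (le_lt_trans F1) // ltry.
rewrite -(fineK Ffin); apply: eV; rewrite /ball /= sub0r normrN ger0_norm.
  move: F1; rewrite -(fineK Ffin) lee_fin le_min => /andP [h _].
apply: le_lt_trans h _.
by rewrite ltr_pdivrMr // ltr_pMr // ltr1n.
by move: F0; rewrite -(fineK Ffin) lee_fin.
Qed.
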